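(* The $d\times(d-1)$ matrix $B=M^+\bigl((F'_p)^2\bigr)-M^+(F)\bigl(M^-(F)\bigr)^{-1}M^-\bigl((F'_p)^2\bigr)$ is expressed in terms of the coefficients $a_i$ alone (without their derivatives) and has maximal rank $d-1$ (at every point of $U$).
   Context: Let $d\ge 3$, let $U\subset\mathbb{C}^2$ be open with coordinates $(x,y)$, and let $F(x,y,p)=\sum_{i=0}^d a_i(x,y)p^{d-i}$ with $a_i$ holomorphic on $U$, $a_0\equiv1$, such that $F(x,y,p)=\prod_{i=1}^d(p-p_i(x,y))$ with holomorphic $p_i$ pairwise distinct at every point of $U$. A polynomial $P=\sum_{i=0}^k g_ip^i$ with holomorphic coefficients is identified with the column vector $(g_0,\dots,g_k)^T$. For such $P$ (of formal degree $\le k$) and an integer $h\ge 0$, $M(P)$ denotes the $(h+k+1)\times(h+1)$ matrix of multiplication by $P$ from polynomials of degree $\le h$ to polynomials of degree $\le h+k$: its entry in row $i$, column $j$ (indices starting at $0$) is $g_{i-j}$ if $0\le i-j\le k$ and $0$ otherwise. Here $M(F)$ is taken of size $(3d-3)\times(2d-3)$ (i.e. $h=2d-4$) and $M((F'_p)^2)$ of size $(3d-3)\times(d-1)$ (i.e. $h=d-2$). For a matrix $X$ with $3d-3$ rows, $X^+$ denotes the submatrix formed by its first $d$ rows and $X^-$ the submatrix formed by its last $2d-3$ rows; $M^-(F)$ is triangular with ones on the diagonal, hence invertible. *)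

(* Defs.v *)
From HB Require Import structures.
From mathcomp Require Import all_boot all_order all_algebra.
From mathcomp Require Import complex.
From mathcomp Require Import mpoly.
Set Implicit Arguments. Unset Strict Implicit. Unset Printing Implicit Defensive.
Import Order.TTheory GRing.Theory Num.Theory.
Local Open Scope ring_scope.

Section Defs.
Variable C : comRingType.

Definition Fpoly (d : nat) (a : 'I_d.+1 -> C) : {poly C} :=
  \sum_(i < d.+1) a i *: 'X^(d - i).

(* M(P) : matrix of multiplication by P (formal degree <= k), of size m x n
   (m = h+k+1, n = h+1): entry (i,j) is g_{i-j} if 0 <= i-j <= k, else 0. *)
Definition Mmul (m n k : nat) (P : {poly C}) : 'M[C]_(m, n) :=
  \matrix_(i < m, j < n) (if (j <= i)%N && (i - j <= k)%N then P`_(i - j) else 0).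

Definition mx_at (m n : nat) (X : 'M[C]_(m, n)) (i : nat) (j : 'I_n) : C :=
  if insub i is Some i' then X i' j else 0.

Definition Mplus (d : nat) (m n : nat) (X : 'M[C]_(m, n)) : 'M[C]_(d, n) :=
  \matrix_(i < d, j < n) mx_at X i j.

Definition Mminus (d r : nat) (m n : nat) (X : 'M[C]_(m, n)) : 'M[C]_(r, n) :=
  \matrix_(i < r, j < n) mx_at X (i + d) j.
End Defs.

Section Bmat.
Variable C : fieldType.
Definition Bmat (d : nat) (a : 'I_d.+1 -> C) : 'M[C]_(d, d - 1) :=
  let F := Fpoly a in
  let MF := Mmul (3 * d - 3) (2 * d - 3) d F in
  let MG := Mmul (3 * d - 3) (d - 1) (2 * d - 2) (F^`() ^+ 2) in
  Mplus d MG - Mplus d MF *m invmx (Mminus d (2 * d - 3) MF) *m Mminus d (2 * d - 3) MG.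
End Bmat.

(* Main.v *)
Require Import Defs.
From HB Require Import structures.
From mathcomp Require Import all_boot all_order all_algebra.
From mathcomp Require Import complex.
From mathcomp Require Import mpoly.
From mathcomp Require Import separable.
From mathcomp Require Import zify.
Import Order.TTheory GRing.Theory Num.Theory.
Local Open Scope ring_scope.
Set Implicit Arguments. Unset Strict Implicit.

Section Gen.
Variable C : comRingType.

Lemma coef_Fpoly d (a : 'I_d.+1 -> C) k :
  (Fpoly a)`_k = \sum_(i < d.+1) a i * (k == (d - i)%N)%:R.
Proof. by rewrite /Fpoly coef_sum; apply: eq_bigr => i _; rewrite coefZ coefXn. Qed.

Lemma coef_Fpoly_d d (a : 'I_d.+1 -> C) : (Fpoly a)`_d = a ord0.
Proof.
rewrite coef_Fpoly (bigD1 ord0) //= subn0 eqxx mulr1 big1 ?addr0 // => i Hi.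
rewrite (_ : (d == (d - i)%N) = false) ?mulr0 //; apply/negbTE.
have := ltn_ord i; move: Hi; case: i => [[|i]] //= Hi Hi2.
move=> _; apply/eqP; lia.
Qed.

Lemma size_Fpoly d (a : 'I_d.+1 -> C) : (size (Fpoly a) <= d.+1)%N.
Proof.
apply/leq_sizeP => k Hk; rewrite coef_Fpoly big1 // => i _.
rewrite (_ : (k == d - i)%N = false) ?mulr0 //; apply/negbTE.
rewrite neq_ltn; apply/orP; right; apply: leq_ltn_trans (leq_subr _ _) Hk.
Qed.

Lemma coef_mul_sum (P : {poly C}) n (c : 'I_n -> C) i :
  (P * \sum_(j < n) c j *: 'X^j)`_i =
  \sum_(j < n) c j * (if (j <= i)%N then P`_(i - j) else 0).
Proof.
rewrite mulr_sumr coef_sum; apply: eq_bigr => j _.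
rewrite -scalerAr coefZ coefMXn; congr (_ * _).
by rewrite ltnNge; case: (j <= i)%N.
Qed.

Lemma Mmul_mul m n k (P : {poly C}) (y : 'cV_n) (i : 'I_m) :
  (size P <= k.+1)%N ->
  (Mmul m n k P *m y) i 0 = (P * \sum_(j < n) y j 0 *: 'X^j)`_i.
Proof.
move=> sP; rewrite coef_mul_sum mxE; apply: eq_bigr => j _.
rewrite mxE mulrC; congr (_ * _).
case: (j <= i)%N => //=; case: leqP => // Hk.
by rewrite nth_default // (leq_trans sP).
Qed.

Lemma coef_mul_big (P : {poly C}) n k (c : 'I_n -> C) i :
  (size P <= k.+1)%N -> (n + k <= i)%N ->
  (P * \sum_(j < n) c j *: 'X^j)`_i = 0.
Proof.
move=> sP Hi; rewrite coef_mul_sum big1 // => j _.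
case: ifP => _; last by rewrite mulr0.
rewrite nth_default ?mulr0 // (leq_trans sP) //.
have := ltn_ord j; lia.
Qed.

Lemma Mplus_mulmx d m n p (X : 'M[C]_(m,n)) (Y : 'M[C]_(n,p)) :
  Mplus d (X *m Y) = Mplus d X *m Y.
Proof.
apply/matrixP => i k; rewrite !mxE /mx_at; case: insubP => [i' Hi Ei|Hi].
  by rewrite mxE; apply: eq_bigr => j _; rewrite mxE /mx_at -Ei valK.
by rewrite big1 // => j _; rewrite /Mplus mxE /mx_at insubF ?mul0r //; apply/negbTE.
Qed.

Lemma Mminus_mulmx d r m n p (X : 'M[C]_(m,n)) (Y : 'M[C]_(n,p)) :
  Mminus d r (X *m Y) = Mminus d r X *m Y.
Proof.
apply/matrixP => i k; rewrite !mxE /mx_at; case: insubP => [i' Hi Ei|Hi].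
  by rewrite mxE; apply: eq_bigr => j _; rewrite mxE /mx_at -Ei valK.
by rewrite big1 // => j _; rewrite /Mminus mxE /mx_at insubF ?mul0r //; apply/negbTE.
Qed.

Lemma det_MmF d m r (a : 'I_d.+1 -> C) : a ord0 = 1 -> (r + d <= m)%N ->
  \det (Mminus d r (Mmul m r d (Fpoly a))) = 1.
Proof.
move=> a0 Hm; rewrite -det_tr det_trig.
  rewrite big1 // => i _; rewrite !mxE /mx_at insubT; first by have := ltn_ord i; lia.
  move=> H /=; rewrite mxE /= (_ : (i + d - i = d)%N) ?leq_addr ?leqnn ?coef_Fpoly_d //; lia.
apply/forallP => i; apply/forallP => j; apply/implyP => Hij; apply/eqP; rewrite !mxE /mx_at.
case: insubP => [j' _ Ej|]; last by [].
rewrite mxE Ej; case: ifP => // /andP [H1 H2]; lia.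
Qed.

Section Map.
Variable C' : comRingType.
Variable f : {rmorphism C -> C'}.

Lemma map_Mplus d m n (X : 'M[C]_(m,n)) : map_mx f (Mplus d X) = Mplus d (map_mx f X).
Proof.
apply/matrixP => i k; rewrite !mxE /mx_at; case: insubP => [i' _ _|_]; first by rewrite mxE.
by rewrite rmorph0.
Qed.

Lemma map_Mminus d r m n (X : 'M[C]_(m,n)) : map_mx f (Mminus d r X) = Mminus d r (map_mx f X).
Proof.
apply/matrixP => i k; rewrite !mxE /mx_at; case: insubP => [i' _ _|_]; first by rewrite mxE.
by rewrite rmorph0.
Qed.

Lemma map_Mmul m n k P : map_mx f (Mmul m n k P) = Mmul m n k (map_poly f P).
Proof.
apply/matrixP => i j; rewrite !mxE; case: ifP => _; first by rewrite coef_map.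
by rewrite rmorph0.
Qed.

Lemma map_Fpoly d (a : 'I_d.+1 -> C) : map_poly f (Fpoly a) = Fpoly (fun i => f (a i)).
Proof.
rewrite /Fpoly rmorph_sum; apply: eq_bigr => i _.
by rewrite /= map_polyZ map_polyXn.
Qed.
End Map.
End Gen.

Lemma colM (C : comRingType) m n p (A : 'M[C]_(m,n)) (W : 'M[C]_(n,p)) k :
  col k (A *m W) = A *m col k W.
Proof.
apply/matrixP => i j; rewrite !mxE; apply: eq_bigr => l _; by rewrite !mxE.
Qed.

Lemma Mplus_add (C : comRingType) d m n (X Y : 'M[C]_(m,n)) :
  Mplus d (X + Y) = Mplus d X + Mplus d Y.
Proof.
apply/matrixP => i k; rewrite !mxE /mx_at; case: insubP => [i' Hi Ei|Hi].
  by rewrite mxE.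
by rewrite addr0.
Qed.

Lemma Mminus_add (C : comRingType) d r m n (X Y : 'M[C]_(m,n)) :
  Mminus d r (X + Y) = Mminus d r X + Mminus d r Y.
Proof.
apply/matrixP => i k; rewrite !mxE /mx_at; case: insubP => [i' Hi Ei|Hi].
  by rewrite mxE.
by rewrite addr0.
Qed.

Lemma Mplus_at (C : comRingType) d m n (X : 'M[C]_(m,n)) (i : 'I_m) (Hi : (i < d)%N) k :
  Mplus d X (Ordinal Hi) k = X i k.
Proof. by rewrite mxE /mx_at /= valK. Qed.

Lemma Mminus_at (C : comRingType) d r m n (X : 'M[C]_(m,n)) (i : 'I_m) (Hi : (i - d < r)%N) k :
  (d <= i)%N -> Mminus d r X (Ordinal Hi) k = X i k.
Proof.
move=> Hd; rewrite mxE /mx_at /= subnK // valK //.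
Qed.

Lemma coef_sumX (C : comRingType) n (c : 'I_n -> C) i :
  (\sum_(j < n) c j *: 'X^j)`_i = \sum_(j < n) c j * (i == j)%:R.
Proof. by rewrite coef_sum; apply: eq_bigr => j _; rewrite coefZ coefXn. Qed.

Lemma coef_sumX_ord (C : comRingType) n (c : 'I_n -> C) (i : 'I_n) :
  (\sum_(j < n) c j *: 'X^j)`_i = c i.
Proof.
rewrite coef_sumX (bigD1 i) //= eqxx mulr1 big1 ?addr0 // => j Hj.
case: eqP => [E|_]; last by rewrite mulr0.
by move/eqP: Hj; case; apply: val_inj.
Qed.

Lemma size_sumX (C : comRingType) n (c : 'I_n -> C) :
  (size (\sum_(j < n) c j *: 'X^j)%R <= n)%N.
Proof.
apply/leq_sizeP => i Hi; rewrite coef_sumX big1 // => j _.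
case: eqP => [E|_]; last by rewrite mulr0.
by move: (ltn_ord j); rewrite -E; lia.
Qed.

Lemma key_B (C : fieldType) d (a : 'I_d.+1 -> C) (w : 'cV[C]_(d-1)) :
  (3 <= d)%N -> a ord0 = 1 -> coprimep (Fpoly a) (Fpoly a)^`() ->
  Bmat a *m w = 0 -> w = 0.
Proof.
move=> hd a0 cop Bw.
set F := Fpoly a in cop.
set MF := Mmul (3 * d - 3) (2 * d - 3) d F.
set MG := Mmul (3 * d - 3) (d - 1) (2 * d - 2) (F^`() ^+ 2).
set Mm := Mminus d (2 * d - 3) MF.
set x := - (invmx Mm *m (Mminus d (2 * d - 3) MG *m w)).
have dMm : \det Mm = 1 by apply: det_MmF => //; lia.
have uMm : Mm \in unitmx by rewrite unitmxE dMm unitr1.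
have Ep : Mplus d (MF *m x + MG *m w) = 0.
  rewrite Mplus_add !Mplus_mulmx -Bw /Bmat -/F -/MF -/MG -/Mm /x.
  by rewrite mulmxN mulmxBl !mulmxA addrC.
have Em : Mminus d (2 * d - 3) (MF *m x + MG *m w) = 0.
  rewrite Mminus_add !Mminus_mulmx -/Mm /x mulmxN !mulmxA mulmxV // mul1mx.
  by rewrite addNr.
have sF : (size F <= d.+1)%N by apply: size_Fpoly.
have F0 : F != 0 by apply/eqP => F0; move: (coef_Fpoly_d a); rewrite -/F F0 coef0 a0 => /eqP; rewrite eq_sym oner_eq0.
have sG : (size (F^`() ^+ 2) <= (2 * d - 2).+1)%N.
  apply: leq_trans (size_poly_exp_leq _ _) _.
  have := lt_size_deriv F0; lia.
set u := \sum_(j < 2 * d - 3) x j 0 *: 'X^j.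
set v := \sum_(j < d - 1) w j 0 *: 'X^j.
have E : F * u + F^`() ^+ 2 * v = 0.
  apply/polyP => i; rewrite coef0 coefD /u /v.
  case: (ltnP i (3 * d - 3)) => Hi; last first.
    rewrite (@coef_mul_big _ F (2 * d - 3) d _ i sF) ?(@coef_mul_big _ _ (d - 1) (2 * d - 2) _ i sG) ?addr0 //; lia.
  have H0 : (MF *m x + MG *m w) (Ordinal Hi) 0 = 0.
    case: (ltnP i d) => Hd.
      by rewrite -(@Mplus_at _ d _ _ _ (Ordinal Hi) Hd) Ep mxE.
    have Hr : (i - d < 2 * d - 3)%N by lia.
    by rewrite -(@Mminus_at _ d (2 * d - 3) _ _ _ (Ordinal Hi) Hr) // Em mxE.
  transitivity ((MF *m x + MG *m w) (Ordinal Hi) 0); last exact: H0.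
  by rewrite mxE (Mmul_mul _ _ sF) (Mmul_mul _ _ sG).
have dv : F %| v.
  rewrite -(Gauss_dvdpr _ (coprimep_expr 2 cop)).
  have -> : F^`() ^+ 2 * v = F * (- u) by rewrite mulrN; apply/eqP; rewrite -addr_eq0 addrC E.
  exact: dvdp_mulIl.
have v0 : v = 0.
  apply/eqP; apply/negPn/negP => nv.
  have := dvdp_leq nv dv.
  have : (d < size F)%N.
    rewrite ltnNge; apply/negP => Hs.
    by move: (coef_Fpoly_d a); rewrite -/F nth_default // a0 => /eqP; rewrite eq_sym oner_eq0.
  have := size_sumX (fun j => w j 0); rewrite -/v => h1 h2 h3; have := leq_trans h2 (leq_trans h3 h1). lia.
apply/matrixP => j k; rewrite ord1 mxE.
by have := congr1 (fun p : {poly C} => p`_(nat_of_ord j)) v0; rewrite /v coef_sumX_ord coef0.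
Qed.

Lemma rank_B (C : fieldType) d (a : 'I_d.+1 -> C) :
  (3 <= d)%N -> a ord0 = 1 -> coprimep (Fpoly a) (Fpoly a)^`() ->
  \rank (Bmat a) = (d - 1)%N.
Proof.
move=> hd a0 cop.
set B := Bmat a.
set K := kermx B^T.
have BK : B *m K^T = 0 by rewrite -[B]trmxK -trmx_mul mulmx_ker trmx0.
have K0 : K = 0.
  apply/matrixP => i j; rewrite mxE.
  have Hc : col i K^T = 0.
    apply: (key_B hd a0 cop); rewrite -/B -colM BK.
    by apply/matrixP => p q; rewrite !mxE.
  by have := congr1 (fun M : 'M[C]_(d - 1, 1) => M j 0) Hc; rewrite !mxE.
have := mxrank_ker B^T; rewrite -/K K0 mxrank0 mxrank_tr.
have := rank_leq_col B; lia.
Qed.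

Lemma invmx_det1 (C : fieldType) n (A : 'M[C]_n) : \det A = 1 -> invmx A = \adj A.
Proof. by move=> dA; rewrite /invmx unitmxE dA unitr1 invr1 scale1r. Qed.

Lemma cop_of_roots (C : fieldType) d (a : 'I_d.+1 -> C) (p : 'I_d -> C) :
  injective p -> Fpoly a = \prod_(i < d) ('X - (p i)%:P) ->
  coprimep (Fpoly a) (Fpoly a)^`().
Proof.
move=> ip ->.
have : separable_poly (\prod_(x <- map p (index_enum 'I_d)) ('X - x%:P)).
  rewrite separable_prod_XsubC map_inj_uniq //; exact: index_enum_uniq.
by rewrite big_map unlock.
Qed.

Unset Implicit Arguments.
Set Strict Implicit.

Theorem lemma2 (R : rcfType) (d : nat) (hd : (3 <= d)%N) :
  (exists P : 'M[{mpoly R[i][d.+1]}]_(d, d - 1),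
     forall a : 'I_d.+1 -> R[i], a ord0 = 1 ->
       Bmat a = map_mx (fun q => q.@[a]) P)
  /\
  (forall a : 'I_d.+1 -> R[i], a ord0 = 1 ->
     (exists p : 'I_d -> R[i], injective p /\
        Fpoly a = \prod_(i < d) ('X - (p i)%:P)) ->
     \rank (Bmat a) = (d - 1)%N).
Proof.
split; last first.
  move=> a a0 [p [ip Fp]]; apply: rank_B => //; exact: cop_of_roots ip Fp.
pose ag := fun i : 'I_d.+1 => ('X_i : {mpoly R[i][d.+1]}).
pose F := Fpoly ag.
pose MF := Mmul (3 * d - 3) (2 * d - 3) d F.
pose MG := Mmul (3 * d - 3) (d - 1) (2 * d - 2) (F^`() ^+ 2).
exists (Mplus d MG - Mplus d MF *m \adj (Mminus d (2 * d - 3) MF) *m Mminus d (2 * d - 3) MG).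
move=> a a0.
have -> : (fun q : {mpoly R[i][d.+1]} => q.@[a]) = meval a by [].
rewrite map_mxB !map_mxM map_mx_adj !map_Mplus !map_Mminus !map_Mmul.
rewrite rmorphXn /= -deriv_map /F map_Fpoly.
have -> : Fpoly (fun i => meval a (ag i)) = Fpoly a by rewrite /Fpoly; apply: eq_bigr => i _; rewrite /ag mevalXU.
rewrite /Bmat /= invmx_det1 //; apply: det_MmF => //; lia.
Qed.
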